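(* For every $\gamma\in(0,1)$, $$\sum_{n=0}^{\infty}2^n\gamma^{2^n}\le\frac{1}{\ln\frac{1}{\gamma}}\left(\frac{1}{e}+\frac{\gamma}{\ln 2}\right).$$ *)

(* Defs.v *)
From Stdlib Require Import Reals.
From Coquelicot Require Import Coquelicot.

(* Main.v *)
Require Import Defs.
From Stdlib Require Import Reals.
From Coquelicot Require Import Coquelicot.
Open Scope R_scope.
From Stdlib Require Import Lra Psatz.

Lemma exp_cubic x : 0 <= x -> 1 + x + x^2/2 + x^3/6 <= exp x.
Proof.
  intro hx. pose proof (exp_ge_taylor x 3 hx) as H.
  simpl in H. unfold Rdiv in *. lra.
Qed.

Lemma ln2_bounds : 0 < ln 2 < 0.7.
Proof.
  split. rewrite <- ln_1; apply ln_increasing; lra.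
  rewrite <- (ln_exp 0.7). apply ln_increasing; [lra|].
  pose proof (exp_cubic 0.7 ltac:(lra)). pose proof (exp_ge_taylor 0.7 4 ltac:(lra)) as H4.
  simpl in H4. lra.
Qed.

Lemma lemA L : 0 < L -> L <= 0.7 ->
  L * exp (-L) + exp (-(2*L)) / ln 2 <= exp (-L) / ln 2.
Proof.
  intros h0 h1. destruct ln2_bounds as [a0 a1]. set (a := ln 2) in *.
  pose proof (exp_cubic L ltac:(lra)) as HE.
  replace (-(2*L)) with (-L + -L) by ring. rewrite exp_plus, exp_Ropp.
  set (E := exp L) in *. assert (0 < E) by (unfold E; apply exp_pos).
  assert (E * (1 - a*L) >= 1).
  { set (P := 1 + L + L^2/2 + L^3/6) in *.
    assert (0 < P) by (unfold P; nra).
    assert (a * P <= 0.7 * P) by nra.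
    assert (0.7 * P <= 1 + L/2 + L^2/6) by (unfold P; nra).
    assert (P * (1 - a*L) >= 1) by (unfold P in *; nra).
    assert (1 - a * L > 0) by nra. nra. }
  replace (L * / E + / E * / E / a) with ((a*L*E + 1) / (a*E*E)) by (field; lra).
  replace (/ E / a) with (E / (a*E*E)) by (field; lra).
  apply Rmult_le_compat_r. apply Rlt_le, Rinv_0_lt_compat; apply Rmult_lt_0_compat; [apply Rmult_lt_0_compat|]; lra. nra.
Qed.

Lemma lemB L : 0.7 <= L ->
  2 * L * exp (-(2*L)) + exp (-(2*L)) / ln 2 <= exp (-L) / ln 2.
Proof.
  intros h1. destruct ln2_bounds as [a0 a1]. set (a := ln 2) in *.
  pose proof (exp_cubic L ltac:(lra)) as HE.
  replace (-(2*L)) with (-L + -L) by ring. rewrite exp_plus, exp_Ropp.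
  set (E := exp L) in *. assert (0 < E) by (unfold E; apply exp_pos).
  assert (E >= 1 + 2*a*L) by nra.
  replace (2 * L * (/ E * / E) + / E * / E / a) with ((2*a*L + 1) / (a*E*E)) by (field; lra).
  replace (/ E / a) with (E / (a*E*E)) by (field; lra).
  apply Rmult_le_compat_r. apply Rlt_le, Rinv_0_lt_compat; apply Rmult_lt_0_compat; [apply Rmult_lt_0_compat|]; lra. nra.
Qed.

Lemma lemM x : x * exp (-x) <= / exp 1.
Proof.
  assert (exp (x - 1) >= x).
  { destruct (Req_dec (x-1) 0). rewrite H, exp_0; lra.
    pose proof (exp_ineq1 _ H); lra. }
  replace (exp (-x)) with (/ exp 1 * / exp (x - 1)).
  2:{ rewrite <- !exp_Ropp, <- exp_plus. f_equal; ring. }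
  pose proof (exp_pos (x-1)). pose proof (exp_pos 1).
  apply (Rmult_le_reg_r (exp 1 * exp (x-1))); [nra|].
  field_simplify; lra.
Qed.

Definition phi (x : R) := x * exp (-x).

Fixpoint SS (N : nat) (L : R) : R :=
  match N with O => 0 | S N => phi L + SS N (2*L) end.

Lemma exp_ln2_pos x : 0 <= exp x / ln 2.
Proof. destruct ln2_bounds. pose proof (exp_pos x). unfold Rdiv.
  apply Rmult_le_pos; [lra|]. apply Rlt_le, Rinv_0_lt_compat; lra. Qed.

Lemma phi_pos x : 0 < x -> 0 <= phi x.
Proof. intro. unfold phi. pose proof (exp_pos (-x)). nra. Qed.

Lemma R1 N : forall L, 0.7 <= L -> SS N L <= phi L + exp (-L) / ln 2.
Proof.
  induction N as [|N IH]; intros L hL; simpl.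
  - pose proof (phi_pos L ltac:(lra)). pose proof (exp_ln2_pos (-L)). lra.
  - pose proof (IH (2*L) ltac:(lra)). pose proof (lemB L hL). unfold phi in *. lra.
Qed.

Lemma C N : forall L, 0 < L -> SS N L <= / exp 1 + exp (-L) / ln 2.
Proof.
  induction N as [|N IH]; intros L hL.
  - simpl. pose proof (exp_pos 1). pose proof (Rinv_0_lt_compat _ H).
    pose proof (exp_ln2_pos (-L)). lra.
  - destruct (Rle_dec L 0.7).
    + simpl. pose proof (IH (2*L) ltac:(lra)). pose proof (lemA L hL r). unfold phi in *. lra.
    + pose proof (R1 (S N) L ltac:(lra)). pose proof (lemM L). unfold phi in *. lra.
Qed.

Lemma shift N : forall L, SS (S N) L = SS N L + phi (L * 2 ^ N).
Proof.
  induction N as [|N IH]; intros L.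
  - simpl. ring_simplify (L*1). ring.
  - change (SS (S (S N)) L) with (phi L + SS (S N) (2*L)). rewrite IH.
    simpl. replace (2 * L * 2 ^ N) with (L * (2 * 2 ^ N)) by ring. ring.
Qed.

Lemma term_eq g k : 0 < g ->
  2 ^ k * g ^ (2 ^ k)%nat = phi (- ln g * 2 ^ k) / (- ln g) \/ ln g = 0.
Proof.
  intro hg. destruct (Req_dec (ln g) 0) as [h|h]; [right; exact h|left].
  rewrite <- (Rpower_pow (2 ^ k)%nat g hg). unfold Rpower, phi. rewrite pow_INR.
  replace (INR 2) with 2 by (simpl; ring).
  replace (- (- ln g * 2 ^ k)) with (2 ^ k * ln g) by ring.
  field. lra.
Qed.

Theorem lemma4 (g : R) (hg0 : 0 < g) (hg1 : g < 1) :
  ex_series (fun n : nat => 2 ^ n * g ^ (2 ^ n)%nat) /\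
  Series (fun n : nat => 2 ^ n * g ^ (2 ^ n)%nat)
    <= / ln (/ g) * (/ exp 1 + g / ln 2).
Proof.
  set (a := fun n : nat => 2 ^ n * g ^ (2 ^ n)%nat).
  set (L := - ln g).
  assert (hL : 0 < L).
  { unfold L. assert (ln g < 0). { rewrite <- ln_1. apply ln_increasing; lra. } lra. }
  assert (hlnL : ln (/ g) = L) by (unfold L; apply ln_Rinv; lra).
  assert (hgL : g = exp (- L)) by (unfold L; rewrite Ropp_involutive, exp_ln; lra).
  assert (ha : forall k, a k = phi (L * 2 ^ k) / L).
  { intro k. unfold a. destruct (term_eq g k hg0) as [h|h]. exact h. unfold L in hL. lra. }
  assert (hsum : forall N, sum_n a N * L = SS (S N) L).
  { induction N as [|N IH].
    - rewrite sum_O, ha. simpl. unfold phi. replace (L * 1) with L by ring. field. lra.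
    - rewrite sum_Sn, shift. rewrite <- IH. unfold plus; simpl. rewrite (ha (S N)). change (2 ^ S N) with (2 * 2 ^ N). field. lra. }
  set (M := / L * (/ exp 1 + g / ln 2)).
  assert (hbound : forall N, sum_n a N <= M).
  { intro N. pose proof (C (S N) L hL) as HC. rewrite <- hsum, <- hgL in HC.
    unfold M. apply (Rmult_le_reg_r L); [exact hL|].
    rewrite (Rmult_comm (/ L)), Rmult_assoc, Rinv_l, Rmult_1_r by lra.
    exact HC. }
  assert (hinc : forall N, sum_n a N <= sum_n a (S N)).
  { intro n. rewrite sum_Sn. unfold plus; simpl. rewrite ha.
    pose proof (phi_pos (L * 2 ^ S n)). assert (0 < L * 2 ^ S n) by (apply Rmult_lt_0_compat; [lra| apply pow_lt; lra]).
    assert (0 <= phi (L * 2 ^ S n) / L). { unfold Rdiv. apply Rmult_le_pos. apply H; lra. apply Rlt_le, Rinv_0_lt_compat; lra. }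
    lra. }
  destruct (ex_finite_lim_seq_incr _ M hinc hbound) as [l Hl].
  split.
  - exists l. exact Hl.
  - rewrite hlnL. fold M. unfold Series.
    rewrite (is_lim_seq_unique _ _ Hl). simpl.
    assert (Rbar_le (Lim_seq (sum_n a)) (Lim_seq (fun _ => M))).
    { apply Lim_seq_le_loc. exists O. intros; apply hbound. }
    rewrite (is_lim_seq_unique _ _ Hl), Lim_seq_const in H. simpl in H. exact H.
Qed.
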